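(* For every integer $i\ge 1$, $\lim_{k\to\infty}\overline{\alpha}(\{1,2i+1,2k\})=\frac12$.
   Context: For a finite set $S$ of positive integers, the distance graph $G(S)$ has vertex set $\mathbb{Z}$, with $i,j$ adjacent iff $|i-j|\in S$. The density of $A\subseteq\mathbb{Z}$ is $\delta(A)=\limsup_{N\to\infty}\frac{|A\cap[-N,N]|}{2N+1}$, and the independence ratio $\overline{\alpha}(S)$ is the supremum of $\delta(A)$ over independent sets $A$ of $G(S)$. *)

(* Defs.v *)
From Stdlib Require Import Reals ZArith List.
From Coquelicot Require Import Coquelicot.
Import ListNotations.
Open Scope R_scope.

(* A subset of Z is represented by its (boolean) indicator function. *)

Definition independent (S : list Z) (A : Z -> bool) : Prop :=
  forall x y : Z, A x = true -> A y = true -> ~ In (Z.abs (x - y)) S.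

(* |A ∩ [-N, N]| *)
Definition count_in (A : Z -> bool) (N : nat) : nat :=
  length (filter (fun j : nat => A (Z.of_nat j - Z.of_nat N)%Z)
                 (seq 0 (2 * N + 1))).

Definition dens_seq (A : Z -> bool) (N : nat) : R :=
  INR (count_in A N) / INR (2 * N + 1).

Definition density (A : Z -> bool) : Rbar := LimSup_seq (dens_seq A).

(* independence ratio: sup of δ(A) over independent sets A of G(S)
   (densities lie in [0,1], so they are finite reals) *)
Definition indep_ratio (S : list Z) : Rbar :=
  Lub_Rbar (fun x : R => exists A : Z -> bool,
                independent S A /\ density A = Finite x).

(* Main.v *)
Require Import Defs.
From Stdlib Require Import Reals ZArith List Lia Lra Psatz.
From Coquelicot Require Import Coquelicot.
Import ListNotations.
Open Scope R_scope.

Fixpoint cnt (A : Z -> bool) (a : Z) (n : nat) : nat :=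
  match n with
  | O => O
  | S n' => (cnt A a n' + (if A (a + Z.of_nat n')%Z then 1 else 0))%nat
  end.

Lemma cnt_filter A c n :
  length (filter (fun j : nat => A (Z.of_nat j - c)%Z) (seq 0 n)) = cnt A (- c) n.
Proof.
  induction n; [reflexivity|].
  rewrite seq_S, filter_app, length_app, IHn. cbn [cnt filter length].
  replace (Z.of_nat (0 + n) - c)%Z with (- c + Z.of_nat n)%Z by lia.
  destruct (A _); simpl; lia.
Qed.

Lemma count_in_cnt A N : count_in A N = cnt A (- Z.of_nat N) (2 * N + 1).
Proof. unfold count_in. apply cnt_filter. Qed.

Lemma cnt_add A a n m : cnt A a (n + m) = (cnt A a n + cnt A (a + Z.of_nat n) m)%nat.
Proof.
  induction m.
  - rewrite Nat.add_0_r. simpl. lia.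
  - rewrite Nat.add_succ_r. cbn [cnt]. rewrite IHm.
    replace (a + Z.of_nat (n + m))%Z with (a + Z.of_nat n + Z.of_nat m)%Z by lia.
    lia.
Qed.

Lemma cnt_pairs_le A (H : forall z, A z = true -> A (z+1)%Z = true -> False) :
  forall n a, (cnt A a (2*n) <= n)%nat.
Proof.
  induction n; intros a; [simpl; lia|].
  replace (2 * S n)%nat with (2*n + 2)%nat by lia.
  rewrite cnt_add. specialize (IHn a).
  assert (cnt A (a + Z.of_nat (2*n)) 2 <= 1)%nat.
  { cbn [cnt]. set (b := (a + Z.of_nat (2*n))%Z).
    specialize (H b).
    replace (b + Z.of_nat 1)%Z with (b+1)%Z by lia.
    replace (b + Z.of_nat 0)%Z with b by lia.
    destruct (A b), (A (b+1)%Z); simpl; try lia.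
    all: exfalso; apply H; auto. }
  lia.
Qed.

Lemma cnt1_le A b : (cnt A b 1 <= 1)%nat.
Proof. cbn [cnt]. destruct (A _); simpl; lia. Qed.

Lemma cnt_odd_le A (H : forall z, A z = true -> A (z+1)%Z = true -> False) n a :
  (cnt A a (2*n+1) <= n + 1)%nat.
Proof.
  rewrite cnt_add. pose proof (cnt_pairs_le A H n a).
  pose proof (cnt1_le A (a + Z.of_nat (2*n))%Z). lia.
Qed.

Lemma dens_le A (H : forall z, A z = true -> A (z+1)%Z = true -> False) N :
  dens_seq A N <= (INR N + 1) / (2 * INR N + 1).
Proof.
  unfold dens_seq. rewrite count_in_cnt.
  pose proof (cnt_odd_le A H N (- Z.of_nat N)%Z) as Hc.
  apply le_INR in Hc. rewrite plus_INR in Hc. change (INR 1) with 1 in Hc.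
  replace (INR (2*N+1)) with (2 * INR N + 1)
    by (rewrite plus_INR, mult_INR; simpl; lra).
  unfold Rdiv. apply Rmult_le_compat_r; auto.
  left; apply Rinv_0_lt_compat. pose proof (pos_INR N). lra.
Qed.

Lemma dens_ge0 A N : 0 <= dens_seq A N.
Proof.
  unfold dens_seq, Rdiv. apply Rmult_le_pos; [apply pos_INR|].
  left; apply Rinv_0_lt_compat, lt_0_INR; lia.
Qed.

Lemma limsup_spec u : is_LimSup_seq u (LimSup_seq u).
Proof.
  destruct (ex_LimSup_seq u) as [l Hl]. rewrite (is_LimSup_seq_unique _ _ Hl). exact Hl.
Qed.

Lemma frac_bound a b : 1 <= b -> b <= a -> (a + 1) / (2 * a + 1) <= 1/2 + / b.
Proof.
  intros Hb Hba.
  replace ((a + 1) / (2 * a + 1)) with (1/2 + / (2 * (2*a+1))) by (field; lra).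
  apply Rplus_le_compat_l. apply Rinv_le_contravar; lra.
Qed.

Lemma density_upper A (H : forall z, A z = true -> A (z+1)%Z = true -> False) x :
  density A = Finite x -> x <= 1/2.
Proof.
  intros Hd. pose proof (limsup_spec (dens_seq A)) as Hs.
  unfold density in Hd. rewrite Hd in Hs. simpl in Hs.
  destruct (Rle_dec x (1/2)) as [|Hx]; auto. exfalso.
  assert (Heps: 0 < (x - 1/2)/2) by lra.
  destruct (Hs (mkposreal _ Heps)) as [H1 _]. simpl in H1.
  destruct (archimed_cor1 ((x-1/2)/2) Heps) as [M [HM HM0]].
  destruct (H1 M) as [n [Hn Hu]].
  pose proof (dens_le A H n).
  apply le_INR in Hn. apply lt_INR in HM0. change (INR 0) with 0 in HM0.
  assert (1 <= INR M). { destruct M; [simpl in HM0; lra|]. rewrite S_INR. pose proof (pos_INR M); lra. }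
  pose proof (frac_bound (INR n) (INR M) H2 Hn).
  lra.
Qed.

Lemma indep_nocons S A : In 1%Z S -> independent S A ->
  forall z, A z = true -> A (z+1)%Z = true -> False.
Proof.
  intros H1 HI z Hz Hz1. apply (HI z (z+1)%Z Hz Hz1).
  replace (Z.abs (z - (z+1))%Z) with 1%Z by lia. exact H1.
Qed.
From Stdlib Require Import Reals ZArith List Lia Lra Psatz.
From Coquelicot Require Import Coquelicot.
From Stdlib Require Import Bool.
Open Scope bool_scope. Open Scope R_scope.

Definition Aset (i k : nat) (x : Z) : bool :=
  ((2 * Z.of_nat i + 1 <=? x mod (2 * Z.of_nat k)) &&
   ((x mod (2 * Z.of_nat k)) mod 2 =? (x / (2 * Z.of_nat k)) mod 2))%Z.

Lemma Aset_at i k x q r : (0 <= r < 2 * Z.of_nat k)%Z -> x = (2 * Z.of_nat k * q + r)%Z ->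
  Aset i k x = ((2 * Z.of_nat i + 1 <=? r) && (r mod 2 =? q mod 2))%Z.
Proof.
  intros Hr Hx. unfold Aset.
  rewrite <- (Z.mod_unique_pos x _ q r Hr Hx), <- (Z.div_unique_pos x _ q r Hr Hx).
  reflexivity.
Qed.

Lemma Aset_decomp i k x : (0 < k)%nat -> Aset i k x = true ->
  exists q r, (0 <= r < 2*Z.of_nat k)%Z /\ x = (2*Z.of_nat k*q + r)%Z /\
     (2*Z.of_nat i+1 <= r)%Z /\ (r mod 2 = q mod 2)%Z.
Proof.
  intros Hk H. exists (x / (2*Z.of_nat k))%Z, (x mod (2*Z.of_nat k))%Z.
  unfold Aset in H. apply andb_prop in H as [H1 H2].
  apply Z.leb_le in H1. apply Z.eqb_eq in H2.
  split; [apply Z.mod_pos_bound; lia|]. split; [apply Z.div_mod; lia|]. auto.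
Qed.

Lemma Aset_shift i k x d : (i + 1 < k)%nat ->
  (d = 1 \/ d = 2*Z.of_nat i+1 \/ d = 2*Z.of_nat k)%Z ->
  Aset i k x = true -> Aset i k (x + d) = true -> False.
Proof.
  intros Hik Hd Hx Hy.
  destruct (Aset_decomp i k x ltac:(lia) Hx) as [qx [rx [Hrx [Ex [Ix Px]]]]].
  destruct (Aset_decomp i k (x+d) ltac:(lia) Hy) as [qy [ry [Hry [Ey [Iy Py]]]]].
  remember (Z.of_nat k) as K. remember (Z.of_nat i) as I.
  assert (HK : (I + 1 < K)%Z) by lia.
  assert (Hq : (2*K*(qy - qx) = rx + d - ry)%Z) by lia.
  assert (Hb1 : (- 2*K < rx + d - ry < 4*K)%Z) by lia.
  assert (Ht: (qy - qx = 0 \/ qy - qx = 1)%Z).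
  { remember (qy - qx)%Z as t.
    destruct (Z.le_gt_cases t (-1)) as [Hl|Hl].
    { assert (2*K*t <= 2*K*(-1))%Z by (apply Z.mul_le_mono_nonneg_l; lia). lia. }
    destruct (Z.le_gt_cases 2 t) as [Hl2|Hl2].
    { assert (2*K*2 <= 2*K*t)%Z by (apply Z.mul_le_mono_nonneg_l; lia). lia. }
    lia. }
  assert (Hr: (ry = rx + d - 2*K*(qy-qx))%Z) by lia.
  destruct Ht as [Ht|Ht]; rewrite Ht in Hr;
  replace qy with (qx + (qy - qx))%Z in Py by ring; rewrite Ht in Py; clear Ex Ey Hq Hx Hy; Z.div_mod_to_equations; lia.
Qed.

Lemma Aset_indep i k : (i+1<k)%nat ->
  independent [1%Z; (2*Z.of_nat i+1)%Z; (2*Z.of_nat k)%Z] (Aset i k).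
Proof.
  intros Hik x y Hx Hy Hin.
  assert (Hd: (Z.abs (x-y) = 1 \/ Z.abs (x-y) = 2*Z.of_nat i+1 \/ Z.abs (x-y) = 2*Z.of_nat k)%Z).
  { destruct Hin as [H|[H|[H|[]]]]; rewrite <- H; auto. }
  destruct (Z.le_gt_cases y x).
  - rewrite Z.abs_eq in Hd by lia. apply (Aset_shift i k y (x-y) Hik Hd Hy).
    replace (y + (x-y))%Z with x by ring. auto.
  - rewrite Z.abs_neq in Hd by lia. apply (Aset_shift i k x (-(x-y)) Hik Hd Hx).
    replace (x + -(x-y))%Z with y by ring. auto.
Qed.

Lemma cnt_ge_true A a n : (forall j, (j < n)%nat -> A (a + 2 * Z.of_nat j)%Z = true) ->
  (n <= cnt A a (2*n))%nat.
Proof.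
  induction n; intros H; [simpl; lia|].
  replace (2*S n)%nat with (2*n+2)%nat by lia. rewrite cnt_add.
  assert (1 <= cnt A (a + Z.of_nat (2*n)) 2)%nat.
  { assert (E: A (a + Z.of_nat (2*n) + Z.of_nat 0)%Z = true)
      by (rewrite <- (H n) by lia; f_equal; lia).
    cbn [cnt]. rewrite E. destruct (A _); simpl; lia. }
  assert (n <= cnt A a (2*n))%nat by (apply IHn; intros; apply H; lia).
  lia.
Qed.

Lemma block_ge i m k s : k = (i+1+m)%nat ->
  (2*m <= cnt (Aset i k) (4*Z.of_nat k*s) (4*k))%nat.
Proof.
  intros Hk.
  assert (Hev: forall b, b = (4*Z.of_nat k*s + 2*Z.of_nat i + 2)%Z ->
     (m <= cnt (Aset i k) b (2*m))%nat).
  { intros b ->. apply cnt_ge_true. intros j Hj.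
    rewrite (Aset_at i k _ (2*s) (2*Z.of_nat i+2+2*Z.of_nat j)).
    - apply andb_true_intro; split; [apply Z.leb_le; lia| apply Z.eqb_eq].
      rewrite <- (Z.mod_unique_pos _ 2 (Z.of_nat i + 1 + Z.of_nat j) 0) by lia.
      rewrite <- (Z.mod_unique_pos _ 2 s 0) by lia. reflexivity.
    - subst k; lia.
    - nia. }
  assert (Hod: forall b, b = (4*Z.of_nat k*s + 2*Z.of_nat k + 2*Z.of_nat i + 1)%Z ->
     (m <= cnt (Aset i k) b (2*m))%nat).
  { intros b ->. apply cnt_ge_true. intros j Hj.
    rewrite (Aset_at i k _ (2*s+1) (2*Z.of_nat i+1+2*Z.of_nat j)).
    - apply andb_true_intro; split; [apply Z.leb_le; lia| apply Z.eqb_eq].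
      rewrite <- (Z.mod_unique_pos _ 2 (Z.of_nat i + Z.of_nat j) 1) by lia.
      rewrite <- (Z.mod_unique_pos _ 2 s 1) by lia. reflexivity.
    - subst k; lia.
    - nia. }
  replace (4*k)%nat with ((2*i+2) + 2*m + (2*i+1) + 2*m + 1)%nat by lia.
  rewrite !cnt_add.
  pose proof (Hev (4 * Z.of_nat k * s + Z.of_nat (2 * i + 2))%Z ltac:(lia)).
  pose proof (Hod (4 * Z.of_nat k * s + Z.of_nat (2 * i + 2 + 2 * m + (2 * i + 1)))%Z
     ltac:(rewrite Hk at 2; lia)).
  lia.
Qed.

Lemma blocks_ge i m k : k = (i+1+m)%nat -> forall n s,
  (n*(2*m) <= cnt (Aset i k) (4*Z.of_nat k*s) (4*k*n))%nat.
Proof.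
  intros Hk. induction n; intros s; [simpl; lia|].
  replace (4*k*S n)%nat with (4*k*n + 4*k)%nat by lia. rewrite cnt_add.
  pose proof (IHn s). pose proof (block_ge i m k (s + Z.of_nat n) Hk).
  replace (4*Z.of_nat k*s + Z.of_nat (4*k*n))%Z with (4*Z.of_nat k*(s+Z.of_nat n))%Z by lia.
  lia.
Qed.

Lemma count_ge i m k t : k = (i+1+m)%nat ->
  (2*t*(2*m) <= count_in (Aset i k) (4*k*t))%nat.
Proof.
  intros Hk. rewrite count_in_cnt.
  replace (2 * (4*k*t) + 1)%nat with (4*k*(2*t) + 1)%nat by lia.
  rewrite cnt_add.
  pose proof (blocks_ge i m k Hk (2*t) (- Z.of_nat t)).
  replace (- Z.of_nat (4*k*t))%Z with (4*Z.of_nat k*(- Z.of_nat t))%Z by lia.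
  lia.
Qed.
From Stdlib Require Import Reals ZArith List Lia Lra Psatz.
From Coquelicot Require Import Coquelicot.

Lemma real_ineq M Kr T : 0 <= M -> M <= Kr -> 1 <= Kr -> 1 <= T ->
  M / (2*Kr) - 2 / Kr + / Kr <= 4*T*M / (8*Kr*T+1).
Proof.
  intros HM HMK HK HT.
  set (D := 8*Kr*T+1).
  assert (HD : Kr <= D) by (unfold D; nra).
  assert (HDp : 0 < D) by lra.
  assert (Eq : 4*T*M / D = M/(2*Kr) - (M/(2*D)) * / Kr).
  { unfold D in *. field. lra. }
  rewrite Eq.
  assert (M/(2*D) <= 1).
  { unfold Rdiv. apply (Rmult_le_reg_r (2*D)); [lra|].
    rewrite Rmult_assoc, Rinv_l by lra. lra. }
  assert ((M/(2*D)) * / Kr <= 1 * / Kr).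
  { apply Rmult_le_compat_r; [left; apply Rinv_0_lt_compat; lra| auto]. }
  unfold Rdiv in *. lra.
Qed.

Lemma density_lower i m k : k = (i+1+m)%nat -> (1 <= m)%nat ->
  exists x, density (Aset i k) = Finite x /\ INR m / (2*INR k) - 2 / INR k <= x.
Proof.
  intros Hk Hm.
  assert (Hnc := indep_nocons [1%Z; (2*Z.of_nat i+1)%Z; (2*Z.of_nat k)%Z] _ ltac:(left; reflexivity) (Aset_indep i k ltac:(lia))).
  pose proof (limsup_spec (dens_seq (Aset i k))) as Hs.
  unfold density.
  assert (HKr : 1 <= INR k).
  { replace 1 with (INR 1) by reflexivity. apply le_INR; lia. }
  destruct (LimSup_seq (dens_seq (Aset i k))) as [l| |]; simpl in Hs.
  - exists l. split; [reflexivity|].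
    assert (Heps : 0 < / INR k) by (apply Rinv_0_lt_compat; lra).
    destruct (Hs (mkposreal _ Heps)) as [_ [N HN]]. simpl in HN.
    set (t := S N).
    specialize (HN (4*k*t)%nat ltac:(unfold t; lia)).
    pose proof (count_ge i m k t Hk) as Hc.
    apply le_INR in Hc.
    assert (Hd : INR (2*t*(2*m)) / INR (2*(4*k*t)+1) <= dens_seq (Aset i k) (4*k*t)).
    { unfold dens_seq. unfold Rdiv. apply Rmult_le_compat_r; auto.
      left; apply Rinv_0_lt_compat, lt_0_INR; lia. }
    assert (E1 : INR (2*t*(2*m)) = 4 * INR t * INR m) by (rewrite !mult_INR; simpl; ring).
    assert (E2 : INR (2*(4*k*t)+1) = 8 * INR k * INR t + 1)
      by (rewrite plus_INR, !mult_INR; simpl; ring).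
    rewrite E1, E2 in Hd.
    assert (HT : 1 <= INR t) by (unfold t; rewrite S_INR; pose proof (pos_INR N); lra).
    assert (HMK : INR m <= INR k) by (apply le_INR; lia).
    pose proof (real_ineq (INR m) (INR k) (INR t) (pos_INR m) HMK HKr HT).
    lra.
  - exfalso. destruct (Hs 1 0%nat) as [n [_ Hn]].
    pose proof (dens_le _ Hnc n). pose proof (pos_INR n).
    assert ((INR n + 1) / (2 * INR n + 1) <= 1).
    { unfold Rdiv. apply (Rmult_le_reg_r (2 * INR n + 1)); [lra|].
      rewrite Rmult_assoc, Rinv_l by lra. lra. }
    lra.
  - exfalso. destruct (Hs 0) as [N HN]. specialize (HN N (le_n N)).
    pose proof (dens_ge0 (Aset i k) N). lra.
Qed.
From Stdlib Require Import Reals ZArith List Lia Lra Psatz.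
From Coquelicot Require Import Coquelicot.

Lemma ratio_bounds i k : (i + 2 <= k)%nat ->
  1/2 - ((INR i + 1)/2 + 2) * / INR k
    <= real (indep_ratio [1%Z; (2 * Z.of_nat i + 1)%Z; (2 * Z.of_nat k)%Z]) <= 1/2.
Proof.
  intros Hk.
  set (S := [1%Z; (2 * Z.of_nat i + 1)%Z; (2 * Z.of_nat k)%Z]).
  set (m := (k - i - 1)%nat). assert (Hkm: k = (i+1+m)%nat) by lia.
  destruct (density_lower i m k Hkm ltac:(lia)) as [x [Hx Hxb]].
  set (E := fun x => exists A, independent S A /\ density A = Finite x).
  assert (HE : E x) by (exists (Aset i k); split; [apply Aset_indep; lia| exact Hx]).
  destruct (Lub_Rbar_correct E) as [Hub Hlub].
  assert (Hub2 : is_ub_Rbar E (1/2)).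
  { intros y [A [HA HdA]]. simpl.
    apply (density_upper A (indep_nocons S A ltac:(left; reflexivity) HA) y HdA). }
  specialize (Hlub _ Hub2). specialize (Hub x HE).
  unfold indep_ratio. fold E.
  destruct (Lub_Rbar E) as [r| |]; simpl in *; try contradiction.
  assert (HKr : 1 <= INR k).
  { replace 1 with (INR 1) by reflexivity. apply le_INR; lia. }
  assert (Hmi : INR m = INR k - INR i - 1).
  { rewrite Hkm, !plus_INR. simpl. ring. }
  assert (Eq : INR m / (2 * INR k) - 2 / INR k = 1/2 - ((INR i + 1)/2 + 2) * / INR k).
  { rewrite Hmi. field. lra. }
  lra.
Qed.

Theorem theorem23 (i : nat) (hi : (1 <= i)%nat) :
  is_lim_seq
    (fun k : nat =>
       real (indep_ratio [1%Z; (2 * Z.of_nat i + 1)%Z; (2 * Z.of_nat k)%Z]))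
    (1 / 2).
Proof.
  apply is_lim_seq_le_le_loc with
    (u := fun k => 1/2 - ((INR i + 1)/2 + 2) * / INR k) (w := fun _ => 1/2).
  - exists (i+2)%nat. intros n Hn. apply ratio_bounds. lia.
  - replace (Finite (1/2)) with (Finite (1/2 - ((INR i + 1)/2 + 2) * 0)) by (f_equal; ring).
    apply is_lim_seq_minus'; [apply is_lim_seq_const|].
    apply is_lim_seq_mult'; [apply is_lim_seq_const|].
    replace (Finite 0) with (Rbar_inv p_infty) by reflexivity.
    apply is_lim_seq_inv; [apply is_lim_seq_INR| discriminate].
  - apply is_lim_seq_const.
Qed.
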